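(* Let $n\ge2$, $\psi\in\mathrm{Aut}(F_n)$, and let $X\to R_n$ be a finite regular cover corresponding to a characteristic finite-index subgroup $K=\pi_1(X)\le F_n$, with deck group $\Gamma=F_n/K$. Then the automorphism of $\Gamma$ induced by $\psi$ is the identity if and only if the automorphism of $H_1(X,\mathbb{Z})$ induced by $\psi$ is $\Gamma$-equivariant, i.e. $\psi(w\cdot d)=w\cdot\psi(d)$ for all $w\in F_n$ (equivalently all $w\in\Gamma$) and $d\in H_1(X,\mathbb{Z})$.
   Context: $F_n$ is the free group of rank $n\ge2$, identified with $\pi_1(R_n,* )$, $R_n$ the wedge of $n$ circles. $K$ characteristic means $\psi(K)=K$ for all $\psi\in\mathrm{Aut}(F_n)$. $H_1(X,\mathbb{Z})\cong K^{ab}=K/[K,K]$; the action $w\cdot d$ of $w\in F_n$ on $d\in K^{ab}$ is induced by conjugation $\gamma\mapsto w\gamma w^{-1}$ on $K$ and factors through $\Gamma$. The automorphism of $H_1(X,\mathbb{Z})$ induced by $\psi$ is the abelianization of $\psi|_K$. *)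

(* Defs.v *)
(* The free group F_n is built concretely as the set of
   freely reduced words over the alphabet 'I_n x bool
   (a letter (i, true) is the generator x_i, (i, false) is x_i^-1). *)
From Stdlib Require List.
From mathcomp Require Import all_boot.
Set Implicit Arguments. Unset Strict Implicit. Unset Printing Implicit Defensive.

Section FreeGroup.
Variable n : nat.

Definition letter := ('I_n * bool)%type.
Definition linv (x : letter) : letter := (x.1, ~~ x.2).

Definition nocancel (y z : letter) : bool := z != linv y.
Definition reduced (w : seq letter) : bool := sorted nocancel w.

Definition push (x : letter) (w : seq letter) : seq letter :=
  if w is y :: w' then (if y == linv x then w' else x :: w) else [:: x].
Definition reduce (w : seq letter) : seq letter := foldr push [::] w.

Lemma push_reduced x w : reduced w -> reduced (push x w).
Proof.
case: w => [|y w] //= Hw.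
case: ifP => Hy; first exact: (path_sorted Hw).
by rewrite /reduced /= /nocancel Hy Hw.
Qed.

Lemma reduce_reduced w : reduced (reduce w).
Proof. by elim: w => [|x w IH] //=; apply: push_reduced. Qed.

Definition Fn := {w : seq letter | reduced w}.

Definition Fn_of (w : seq letter) : Fn := exist _ (reduce w) (reduce_reduced w).

Definition fgone : Fn := Fn_of [::].
Definition fgmul (a b : Fn) : Fn := Fn_of (proj1_sig a ++ proj1_sig b).
Definition fginv (a : Fn) : Fn := Fn_of (map linv (rev (proj1_sig a))).
Definition fconj (w d : Fn) : Fn := fgmul (fgmul w d) (fginv w).
Definition fcomm (a b : Fn) : Fn := fgmul (fgmul a b) (fgmul (fginv a) (fginv b)).

Definition is_hom (f : Fn -> Fn) : Prop :=
  forall a b, f (fgmul a b) = fgmul (f a) (f b).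
Definition is_aut (f : Fn -> Fn) : Prop := is_hom f /\ bijective f.

Definition is_subgroup (K : Fn -> Prop) : Prop :=
  [/\ K fgone, (forall a b, K a -> K b -> K (fgmul a b)) &
      (forall a, K a -> K (fginv a))].

Definition characteristic (K : Fn -> Prop) : Prop :=
  forall psi, is_aut psi -> forall x, K (psi x) <-> K x.

Definition finite_index (K : Fn -> Prop) : Prop :=
  exists reps : seq Fn, forall w, exists2 r, List.In r reps & K (fgmul (fginv r) w).

Inductive gen (S : Fn -> Prop) : Fn -> Prop :=
  | gen_one : gen S fgone
  | gen_mul : forall x y, S x -> gen S y -> gen S (fgmul x y)
  | gen_invmul : forall x y, S x -> gen S y -> gen S (fgmul (fginv x) y).

Definition derived (K : Fn -> Prop) : Fn -> Prop :=
  gen (fun c => exists a b, [/\ K a, K b & c = fcomm a b]).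

End FreeGroup.

(* Main.v *)
Require Import Defs.
From mathcomp Require Import all_boot.
From Stdlib Require Import ZArith Lia Classical ClassicalEpsilon.
From mathcomp Require Import zify.
Set Implicit Arguments. Unset Strict Implicit. Unset Printing Implicit Defensive.
Section G.
Variable n : nat.
Notation letter := (letter n).
Notation Fn := (Fn n).
Implicit Types (a b c : Fn) (x : letter) (u v w bs cs : seq letter).

Lemma linvK x : linv (linv x) = x.
Proof. by case: x => i b; rewrite /linv /= negbK. Qed.

Lemma push_cancel x w : reduced w -> push x (push (linv x) w) = w.
Proof.
case: w => [|y w] /=; first by rewrite eqxx.
case: ifP => [/eqP-> Hw|Hy Hw] /=.
  rewrite linvK; case: w Hw => [|z w] //= /andP[Hz _].
  by rewrite /nocancel !linvK in Hz; rewrite (negbTE Hz).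
by rewrite eqxx.
Qed.

Lemma push_cancel' x w : reduced w -> push (linv x) (push x w) = w.
Proof. by move=> H; have := push_cancel (linv x) H; rewrite linvK. Qed.

Lemma reduced_foldr u w : reduced w -> reduced (foldr (@push n) w u).
Proof. by elim: u => //= x u IH Hw; apply: push_reduced; apply: IH. Qed.

Lemma foldr_push cs x w : reduced cs -> reduced w ->
  foldr (@push n) cs (push x w) = push x (foldr (@push n) cs w).
Proof.
move=> Hc; case: w => [|y w] //= Hw.
case: ifP => [/eqP Hy|] //.
rewrite Hy push_cancel //; apply: reduced_foldr =>//; exact: path_sorted Hw.
Qed.

Lemma foldrA u bs cs : reduced bs -> reduced cs ->
  foldr (@push n) cs (foldr (@push n) bs u) = foldr (@push n) (foldr (@push n) cs bs) u.
Proof.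
move=> Hb Hc; elim: u => //= x u IH.
by rewrite foldr_push // ?IH //; apply: reduced_foldr.
Qed.

Lemma reduce_id w : reduced w -> reduce w = w.
Proof.
elim: w => //= x w IH Hw; rewrite IH; last exact: path_sorted Hw.
case: w Hw {IH} => //= y w /andP[Hy _]; rewrite /nocancel in Hy.
by rewrite (negbTE Hy).
Qed.

Lemma Fn_eq a b : proj1_sig a = proj1_sig b -> a = b.
Proof.
case: a b => [u Hu] [v Hv] /= E; subst v; congr exist; exact: eq_irrelevance.
Qed.

Definition M u v := foldr (@push n) v u.

Lemma valM a b : proj1_sig (fgmul a b) = M (proj1_sig a) (proj1_sig b).
Proof.
rewrite /fgmul /= /reduce foldr_cat. 
by case: b => v Hv /=; rewrite -/(reduce v) reduce_id.
Qed.

Lemma mulA a b c : fgmul a (fgmul b c) = fgmul (fgmul a b) c.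
Proof.
apply: Fn_eq; rewrite !valM /M foldrA //; by [case: b|case: c].
Qed.

Lemma mul1 a : fgmul (fgone n) a = a.
Proof. by apply: Fn_eq; rewrite valM. Qed.

Lemma mul1r a : fgmul a (fgone n) = a.
Proof. by apply: Fn_eq; rewrite valM /M /=; case: a => u Hu /=; rewrite -/(reduce u) reduce_id. Qed.

Definition winv u := map (@linv n) (rev u).

Lemma M_inv u w : reduced w -> M (winv u) (M u w) = w.
Proof.
elim: u w => //= x u IH w Hw.
rewrite /winv rev_cons map_rcons /M -cats1 foldr_cat /= push_cancel' ?IH //.
  exact: IH. exact: reduced_foldr.
Qed.

Lemma M_red u v : reduced v -> M (reduce u) v = M u v.
Proof. by move=> Hv; rewrite /M /reduce foldrA. Qed.

Lemma mulV a : fgmul (fginv a) a = fgone n.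
Proof.
apply: Fn_eq; rewrite valM /= M_red; last by case: a.
case: a => u Hu /=; rewrite -{2}(reduce_id Hu).
by rewrite -[reduce u]/(M u [::]) M_inv.
Qed.

Local Notation "a ⋅ b" := (fgmul a b) (at level 40, left associativity).
Local Notation "a ⁻" := (fginv a) (at level 2, format "a ⁻").
Local Notation one := (fgone n).

Lemma mulKl a b : a⁻ ⋅ (a ⋅ b) = b.
Proof. by rewrite mulA mulV mul1. Qed.

Lemma mulVr a : a ⋅ a⁻ = one.
Proof.
rewrite -[a ⋅ a⁻]mul1 -{1}(mulV a⁻) -mulA (mulA a⁻ a) mulV mul1.
exact: mulV.
Qed.

Lemma mulKr a b : a ⋅ (a⁻ ⋅ b) = b.
Proof. by rewrite mulA mulVr mul1. Qed.
Lemma mulgK a b : b ⋅ a ⋅ a⁻ = b.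
Proof. by rewrite -mulA mulVr mul1r. Qed.
Lemma mulgKV a b : b ⋅ a⁻ ⋅ a = b.
Proof. by rewrite -mulA mulV mul1r. Qed.

Lemma inv_uniq a b : a ⋅ b = one -> a⁻ = b.
Proof. by move=> H; rewrite -(mulKl a b) H mul1r. Qed.

Lemma invK a : a⁻⁻ = a.
Proof. by apply: inv_uniq; rewrite mulV. Qed.

Lemma invM a b : (a ⋅ b)⁻ = b⁻ ⋅ a⁻.
Proof. by apply: inv_uniq; rewrite !mulA mulgK mulVr. Qed.

Lemma inv1 : one⁻ = one.
Proof. by apply: inv_uniq; rewrite mul1. Qed.

Lemma mulIl a b c : a ⋅ b = a ⋅ c -> b = c.
Proof. by move=> H; rewrite -(mulKl a b) H mulKl. Qed.

Lemma mulIr a b c : b ⋅ a = c ⋅ a -> b = c.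
Proof. by move=> H; rewrite -(mulgK a b) H mulgK. Qed.

Lemma hom1 f : is_hom f -> f one = one.
Proof. by move=> Hf; apply: (@mulIl (f one)); rewrite -Hf !mul1r. Qed.

Lemma homV f a : is_hom f -> f a⁻ = (f a)⁻.
Proof. by move=> Hf; apply/esym/inv_uniq; rewrite -Hf mulVr hom1. Qed.

Section Sub.
Variable K : Fn -> Prop.
Hypothesis HK : is_subgroup K.

Lemma K1 : K one. Proof. by case: HK. Qed.
Lemma KM a b : K a -> K b -> K (a ⋅ b). Proof. by case: HK => _ H _; apply: H. Qed.
Lemma KV a : K a -> K a⁻. Proof. by case: HK => _ _ H; apply: H. Qed.
Lemma KVE a : K a⁻ <-> K a.
Proof. by split => [/KV|/KV //]; rewrite invK. Qed.

Definition conjf (g : Fn) : Fn -> Fn := fun c => g ⋅ c ⋅ g⁻.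

Lemma conjf_aut g : is_aut (conjf g).
Proof.
split.
  by move=> a b; rewrite /conjf !mulA mulgKV.
exists (conjf g⁻) => c; rewrite /conjf invK !mulA.
  by rewrite mulV mul1 mulgKV.
by rewrite mulVr mul1 mulgK.
Qed.

Hypothesis Hch : characteristic K.

Lemma Knorm g c : K (g ⋅ c ⋅ g⁻) <-> K c.
Proof. exact: (Hch (conjf_aut g) c). Qed.

Lemma KnormV g c : K (g⁻ ⋅ c ⋅ g) <-> K c.
Proof. by have := Knorm g⁻ c; rewrite invK. Qed.

Lemma forward (psi : Fn -> Fn) : is_aut psi -> (forall w : Fn, K (w⁻ ⋅ psi w)) ->
  forall w d : Fn, K d -> derived K ((psi (fconj w d))⁻ ⋅ fconj w (psi d)).
Proof.
case=> Hh Hb Hw w d Kd.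
have KD : K (psi d) by apply/(Hch (conj Hh Hb) d).
have Kk := Hw w.
have Hm : forall a b, psi (a ⋅ b) = psi a ⋅ psi b := Hh.
rewrite /fconj !Hm homV //.
have -> : psi w = w ⋅ (w⁻ ⋅ psi w) by rewrite mulKr.
move: (w⁻ ⋅ psi w) Kk (psi d) KD => k Kk D KD.
have -> : (w ⋅ k ⋅ D ⋅ (w ⋅ k)⁻)⁻ ⋅ (w ⋅ D ⋅ w⁻) =
          fcomm (w ⋅ k ⋅ w⁻) (w ⋅ D⁻ ⋅ w⁻).
  rewrite /fcomm !invM !invK !mulA !mulgKV.
  by [].
rewrite -[fcomm _ _]mul1r; apply: gen_mul; last exact: gen_one.
exists (w ⋅ k ⋅ w⁻), (w ⋅ D⁻ ⋅ w⁻); split => //; apply/Knorm => //.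
exact: KV.
Qed.

Lemma Kl k c : K k -> (K (k ⋅ c) <-> K c).
Proof.
move=> Kk; split => [H|H]; last exact: KM.
by rewrite -(mulKl k c); apply: KM => //; apply: KV.
Qed.

Lemma Kr k c : K k -> (K (c ⋅ k) <-> K c).
Proof.
move=> Kk; split => [H|H]; last exact: KM.
by rewrite -(mulgK k c); apply: KM => //; apply: KV.
Qed.

Definition ind (P : Prop) : Z := if excluded_middle_informative P then 1%Z else 0%Z.
Lemma indT (P : Prop) : P -> ind P = 1%Z.
Proof. by rewrite /ind; case: excluded_middle_informative. Qed.
Lemma indF (P : Prop) : ~ P -> ind P = 0%Z.
Proof. by rewrite /ind; case: excluded_middle_informative. Qed.
Lemma ind_iff (P Q : Prop) : (P <-> Q) -> ind P = ind Q.
Proof.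
move=> H; rewrite /ind; case: (excluded_middle_informative P) => p; case: (excluded_middle_informative Q) => q //; exfalso; tauto.
Qed.

Definition iota (l : letter) : Fn := Fn_of [:: l].

Lemma iota_linv l : iota l ⋅ iota (linv l) = one.
Proof. by apply: Fn_eq; rewrite valM /M /= eqxx. Qed.

Lemma Fn_of_cons l u : iota l ⋅ Fn_of u = Fn_of (l :: u).
Proof. by apply: Fn_eq; rewrite valM. Qed.

Lemma Fn_of_val a : Fn_of (proj1_sig a) = a.
Proof. by apply: Fn_eq; case: a => u Hu /=; rewrite reduce_id. Qed.

Section Cnt.
Variable i : 'I_n.

Definition term (y s : Fn) (l : letter) : Z :=
  if l == (i, true) then ind (K (y⁻ ⋅ s))
  else if l == (i, false) then (- ind (K (y⁻ ⋅ (s ⋅ iota l))))%Z else 0%Z.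

Fixpoint cnt (y s : Fn) (w : seq letter) : Z :=
  match w with [::] => 0%Z | l :: w' => (term y s l + cnt y (s ⋅ iota l) w')%Z end.

Lemma term_cancel y s l : (term y s l + term y (s ⋅ iota l) (linv l) = 0)%Z.
Proof.
rewrite /term -mulA iota_linv mul1r.
case: l => j b; case: b; case: (eqVneq j i) => [->|ne]; rewrite /linv /= ?xpair_eqE ?eqxx /=;
  rewrite ?(negbTE ne) /=; lia.
Qed.

Lemma cnt_push y s l w : cnt y s (push l w) = cnt y s (l :: w).
Proof.
case: w => [|l' w] //=; case: ifP => // /eqP ->.
by rewrite -mulA iota_linv mul1r; have := term_cancel y s l; lia.
Qed.

Lemma cnt_M y s u v : cnt y s (M u v) = cnt y s (u ++ v).
Proof.
elim: u s => //= l u IH s; rewrite -/(M u v) cnt_push /= IH //.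
Qed.

Lemma cnt_cat y s u v : cnt y s (u ++ v) = (cnt y s u + cnt y (s ⋅ Fn_of u) v)%Z.
Proof.
elim: u s => [|l u IH] s /=; first by rewrite mul1r.
by rewrite IH -mulA Fn_of_cons; lia.
Qed.

Definition H (y a : Fn) : Z := cnt y one (proj1_sig a).

Lemma cnt_trans g y s w : cnt (g ⋅ y) (g ⋅ s) w = cnt y s w.
Proof.
elim: w s => //= l w IH s; rewrite -mulA IH; congr (_ + _)%Z.
by rewrite /term invM !mulA mulgKV.
Qed.

Lemma H_mul y a b : H y (a ⋅ b) = (H y a + H (a⁻ ⋅ y) b)%Z.
Proof.
rewrite /H valM cnt_M cnt_cat mul1 Fn_of_val; congr (_ + _)%Z.
by rewrite -(cnt_trans a⁻) mulV.
Qed.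

Lemma cnt_y y y' s w : K (y⁻ ⋅ y') -> cnt y s w = cnt y' s w.
Proof.
move=> Ky; elim: w s => //= l w IH s; rewrite IH; congr (_ + _)%Z.
have E c : K (y⁻ ⋅ c) <-> K (y'⁻ ⋅ c).
  have -> : y'⁻ ⋅ c = (y⁻ ⋅ y')⁻ ⋅ (y⁻ ⋅ c) by rewrite invM invK !mulA mulgK.
  by rewrite (Kl _ (KV Ky)).
by rewrite /term (ind_iff (E s)) (ind_iff (E (s ⋅ iota l))).
Qed.

Lemma H_y y y' a : K (y⁻ ⋅ y') -> H y a = H y' a.
Proof. exact: cnt_y. Qed.

Lemma H_addK y a b : K a -> H y (a ⋅ b) = (H y a + H y b)%Z.
Proof.
move=> Ka; rewrite H_mul; congr (_ + _)%Z; apply/esym/H_y.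
by rewrite mulA; apply/KnormV; apply: KV.
Qed.

Lemma H_one y : H y one = 0%Z.
Proof. by []. Qed.

Lemma H_inv y a : K a -> H y a⁻ = (- H y a)%Z.
Proof. by move=> Ka; have := H_addK y a⁻ Ka; rewrite mulVr H_one; lia. Qed.

Lemma H_conj y g D : K D -> H y (g ⋅ D ⋅ g⁻) = H (g⁻ ⋅ y) D.
Proof.
move=> KD; rewrite !H_mul.
have -> : H ((g ⋅ D)⁻ ⋅ y) g⁻ = H (g⁻ ⋅ y) g⁻.
  apply: H_y; rewrite !invM !invK !mulA.
  have := Knorm (y⁻ ⋅ g) D; rewrite invM invK !mulA; tauto.
have := H_mul y g g⁻; rewrite mulVr H_one; lia.
Qed.


Definition pw (g : Fn) (k : nat) : Fn := ssrnat.iter k (fgmul g) one.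

Lemma HpwS y k : H y (pw (iota (i, true)) k.+1) =
  (ind (K (y⁻ ⋅ one)) + H ((iota (i, true))⁻ ⋅ y) (pw (iota (i, true)) k))%Z.
Proof.
rewrite [pw _ k.+1]/= H_mul; congr (_ + _)%Z.
by rewrite /H /= /term eqxx; lia.
Qed.

Lemma Hpw_other j y k : j != i -> H y (pw (iota (j, true)) k) = 0%Z.
Proof.
move=> ne; elim: k y => // k IH y.
rewrite [pw _ k.+1]/= H_mul IH.
rewrite /H /= /term !xpair_eqE (negbTE ne) /=; lia.
Qed.

Lemma Hpw0 k y : (forall j, j < k -> ~ K (y⁻ ⋅ pw (iota (i, true)) j)) ->
  H y (pw (iota (i, true)) k) = 0%Z.
Proof.
elim: k y => // k IH y Hj.
rewrite HpwS IH ?indF //.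
  exact: (Hj 0).
by move=> j Hjk; rewrite invM invK -mulA; apply: (Hj j.+1).
Qed.

Lemma H_derived y e : derived K e -> H y e = 0%Z.
Proof.
elim => // [x z [a [b [Ka Kb ->]]] _ IH | x z [a [b [Ka Kb ->]]] _ IH].
  rewrite H_addK; last by apply: KM; apply: KM => //; apply: KV.
  rewrite /fcomm !H_addK ?H_inv //; try apply: KM => //; try apply: KV => //. lia.
rewrite H_addK; last by apply: KV; apply: KM; apply: KM => //; apply: KV.
rewrite H_inv; last by apply: KM; apply: KM => //; apply: KV.
rewrite /fcomm !H_addK ?H_inv //; try apply: KM => //; try apply: KV => //. lia.
Qed.

End Cnt.

Lemma pwD g (a b : nat) : pw g (a + b) = pw g a ⋅ pw g b.
Proof.
have pwS k : pw g k.+1 = g ⋅ pw g k by [].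
by elim: a => [|a IH]; rewrite ?add0n ?mul1 // addSn !pwS IH mulA.
Qed.

Lemma pw_sub g j1 j2 : j1 <= j2 -> (pw g j1)⁻ ⋅ pw g j2 = pw g (j2 - j1).
Proof. by move=> H12; rewrite -{1}(subnKC H12) pwD mulKl. Qed.

Lemma In_nth (reps : seq Fn) r : List.In r reps ->
  exists k, k < size reps /\ nth one reps k = r.
Proof.
elim: reps => //= a reps IH [->|/IH [k [Hk Hr]]]; first by exists 0.
by exists k.+1.
Qed.

Lemma pigeon g : finite_index K -> exists m, 0 < m /\ K (pw g m).
Proof.
case=> reps Hr; apply: NNPP => Hno.
have Hno' m : 0 < m -> ~ K (pw g m) by move=> Hm Km; apply: Hno; exists m.
pose N := size reps.
have Hidx (j : 'I_N.+1) : exists k : 'I_N, K ((nth one reps k)⁻ ⋅ pw g j).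
  have [r /In_nth [k [Hk <-]] Kr] := Hr (pw g j).
  by exists (Ordinal Hk).
pose f j := proj1_sig (constructive_indefinite_description _ (Hidx j)).
have fP j : K ((nth one reps (f j))⁻ ⋅ pw g j) := proj2_sig (constructive_indefinite_description _ (Hidx j)).
have inj : injective f.
  move=> j1 j2 E.
  have K12 : K ((pw g j1)⁻ ⋅ pw g j2).
    have := KM (KV (fP j1)) (fP j2); rewrite E invM invK !mulA mulgK.
    by [].
  apply: val_inj; case: (ltngtP (nat_of_ord j1) j2) => Hlt; last by [].
    exfalso; move: K12; rewrite (pw_sub g (ltnW Hlt)); apply: Hno'.
    by rewrite subn_gt0.
  exfalso; move/KV: K12; rewrite invM invK (pw_sub g (ltnW Hlt)); apply: Hno'.
  by rewrite subn_gt0.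
have := leq_card f inj. rewrite !card_ord ltnn. by [].
Qed.
Lemma min_pw g : (exists m, 0 < m /\ K (pw g m)) ->
  exists m, [/\ 0 < m, K (pw g m) & forall j, 0 < j < m -> ~ K (pw g j)].
Proof.
case=> m [Hm Km].
suff: forall N m, m <= N -> 0 < m -> K (pw g m) -> exists m,
  [/\ 0 < m, K (pw g m) & forall j, 0 < j < m -> ~ K (pw g j)] by move=> H0; apply: (H0 m m).
clear Hm Km; elim=> [|N IH] m0 HmN Hm Km; first by case: m0 HmN Hm Km.
case: (classic (exists j, 0 < j < m0 /\ K (pw g j))) => [[j [/andP[Hj0 Hjm] Kj]]|Hno].
  by apply: (IH j) => //; rewrite -ltnS (leq_trans Hjm).
by exists m0; split => // j Hj Kj; apply: Hno; exists j.
Qed.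

Definition Kc a b := K (a⁻ ⋅ b).
Lemma Kc_sym a b : Kc a b -> Kc b a.
Proof. by rewrite /Kc => /KV; rewrite invM invK. Qed.
Lemma Kc_trans a b c : Kc a b -> Kc b c -> Kc a c.
Proof. by rewrite /Kc => H1 H2; have := KM H1 H2; rewrite !mulA mulgK. Qed.
Lemma Kc_mulr a b c : Kc a b -> Kc (a ⋅ c) (b ⋅ c).
Proof. by rewrite /Kc invM !mulA -(mulA _ a⁻) => /(KnormV c). Qed.
Lemma Kc_K a b : Kc a b -> K a -> K b.
Proof. by rewrite /Kc => H1 Ka; have := KM Ka H1; rewrite mulKr. Qed.


Lemma caseA i (v : Fn) m : 0 < m -> (forall j, 0 < j < m -> ~ K (pw (iota (i,true)) j)) ->
  (forall j, j < m -> ~ K (v⁻ ⋅ pw (iota (i,true)) j)) ->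
  H i v (pw (iota (i,true)) m) = H i one (pw (iota (i,true)) m) -> False.
Proof.
move=> Hm Hmin Hv; rewrite (Hpw0 Hv).
case: m Hm Hmin Hv => // m _ Hmin _.
rewrite HpwS Hpw0 ?indT.
- lia.
- by rewrite mulV; apply: K1.
- by move=> j Hj; rewrite mul1r invK; apply: (Hmin j.+1).
Qed.

Lemma caseB (i i' : 'I_n) (v : Fn) (m s b : nat) : i' != i -> 0 < s < m -> K (pw (iota (i,true)) m) ->
  (forall j, 0 < j < m -> ~ K (pw (iota (i,true)) j)) ->
  K (v⁻ ⋅ pw (iota (i,true)) s) -> K (v⁻ ⋅ pw (iota (i',true)) b) ->
  (forall D, K D -> H i v D = H i one D) -> False.
Proof.
set g := iota (i,true); set h := iota (i',true).
move=> ne /andP[Hs Hsm] Km Hmin Ks Kb Hall.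
have Kc_hg : Kc (pw g s) (pw h b) by apply: (Kc_trans (Kc_sym Ks)).
have KD : K (pw h b ⋅ pw g (m - s)).
  apply: (Kc_K (Kc_mulr (pw g (m - s)) Kc_hg)).
  by rewrite -pwD subnKC // ltnW.
have := Hall _ KD; rewrite !H_mul (Hpw_other _ _ ne) (Hpw_other _ _ ne) /g.

rewrite [H i (_ ⋅ one) _]Hpw0; last first.
  move=> j Hj; rewrite mul1r invK -/g => Kj.
  have : K (pw g (s + j)).
    by rewrite pwD; apply: (Kc_K (Kc_sym (Kc_mulr (pw g j) Kc_hg))).
  apply: Hmin; apply/andP; split; move: Hj Hsm Hs; lia.
have -> : m - s = (m - s - 1).+1 by rewrite subn1 prednK // subn_gt0.
rewrite HpwS Hpw0 ?indT.
- lia.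
- by rewrite invM invK mul1r.
- move=> j Hj; rewrite !invM !invK ?mulA.
  rewrite -(mulA _ (iota (i,true))) (Kl _ Kb).
  apply: (Hmin j.+1); apply/andP; split => //; move: Hj Hsm Hs; lia.
Qed.

Lemma backward (n2 : 1 < n) (fi : finite_index K) (psi : Fn -> Fn) : is_aut psi ->
  (forall w d : Fn, K d -> derived K ((psi (fconj w d))⁻ ⋅ fconj w (psi d))) ->
  forall w : Fn, K (w⁻ ⋅ psi w).
Proof.
move=> Haut Heq w; apply: NNPP => Hnot.
case: (Haut) => Hh [psiinv Hc1 Hc2].
have Hm : forall a b, psi (a ⋅ b) = psi a ⋅ psi b := Hh.
pose v := (psi w)⁻ ⋅ w.
have Kv : ~ K v by rewrite /v => /KV; rewrite invM invK.
have Hall i D : K D -> H i v D = H i one D.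
  move=> KD.
  have Kd : K (psiinv D) by apply/(Hch Haut); rewrite Hc2.
  have := H_derived i w (Heq w (psiinv D) Kd).
  rewrite /fconj !Hm homV // Hc2.
  have KQ : K (psi w ⋅ D ⋅ (psi w)⁻) by apply/Knorm.
  rewrite H_addK; last by apply: KV.
  rewrite H_inv //.
  rewrite !H_conj // mulV /v; lia.

have i0lt : 0 < n by apply: ltnW.
pose i0 := Ordinal i0lt; pose i1 := Ordinal n2.
have ne : i1 != i0 by [].
have [m0 [Hm0 Km0 Hmin0]] := min_pw (pigeon (iota (i0,true)) fi).
case: (classic (exists s, s < m0 /\ K (v⁻ ⋅ pw (iota (i0,true)) s))) =>
    [[s [Hs Ks]]|no0]; last first.
  apply: (caseA Hm0 Hmin0 _ (Hall i0 _ Km0)).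
  by move=> j Hj Kj; apply: no0; exists j.
have Hs0 : 0 < s.
  case: s Hs Ks => // _; rewrite mul1r => /KV; rewrite invK //.
have [m1 [Hm1 Km1 Hmin1]] := min_pw (pigeon (iota (i1,true)) fi).
case: (classic (exists bb : nat, bb < m1 /\ K (v⁻ ⋅ pw (iota (i1,true)) bb))) =>
    [[b [Hb Kb]]|no1]; last first.
  apply: (caseA Hm1 Hmin1 _ (Hall i1 _ Km1)).
  by move=> j Hj Kj; apply: no1; exists j.
apply: (caseB ne _ Km0 Hmin0 Ks Kb (Hall i0)).
by rewrite Hs0 Hs.
Qed.
End Sub.
End G.

Theorem lemma3p2 (n : nat) (hn : 2 <= n) (K : Fn n -> Prop) (psi : Fn n -> Fn n) :
  is_subgroup K -> characteristic K -> finite_index K -> is_aut psi ->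
  ((* psi induces the identity on Gamma = F_n / K : psi(w) K = w K *)
   (forall w : Fn n, K (fgmul (fginv w) (psi w))) <->
   (* the induced map on K^ab = K/[K,K] is Gamma-equivariant:
      [psi(w d w^-1)] = [w psi(d) w^-1] in K/[K,K] *)
   (forall w d : Fn n, K d ->
      derived K (fgmul (fginv (psi (fconj w d))) (fconj w (psi d))))).
Proof.
move=> HK Hch fi Haut; split.
  exact: forward.
exact: backward.
Qed.
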